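(* For every instance, $$\mathrm{opt}_M\text{-}\mathrm{SUM}\le \mathrm{opt}_D\text{-}\mathrm{EMP}\qquad\text{and}\qquad \mathrm{opt}_M\text{-}\mathrm{MAX}\le\mathrm{opt}_D\text{-}\mathrm{WMP}.$$
   Context: An instance consists of a finite set $E$ of elements with nonnegative weights $(p_e)$ (normalized $\sum_ep_e=1$ for SUM objectives, $\max_ep_e=1$ for MAX objectives) and $m$ tests, test $i$ being a subset $s_i\subseteq E$. A deterministic schedule is a fixed infinite test sequence $\sigma_1,\sigma_2,\dots$; a memoryless schedule draws each $\sigma_t$ i.i.d. from a distribution $q$ on tests. Detection time $T(e,t)=\mathbb{E}[1+\min\{h\ge0:e\in s_{\sigma_{t+h}}\}]$, $M_t[e]=\sup_tT(e,t)$, $E_t[e]=\lim_H\frac1H\sum_{t\le H}T(e,t)$; valid schedules have $M_t[e]<\infty$ and $E_t[e]$ existing for all $e$, and convergent test frequencies $\lim_H\frac1H\sum_{t\le H}\Pr[\sigma_t=i]$. $\mathrm{EMP}=\sum_ep_eM_t[e]$, $\mathrm{WMP}=\sup_{e,t}p_eT(e,t)$. $\mathrm{opt}_D\text{-}X$ is the infimum of $X$ over valid deterministic schedules; $\mathrm{opt}_M\text{-}\mathrm{SUM}=\inf_q\sum_ep_e/Q_e$ and $\mathrm{opt}_M\text{-}\mathrm{MAX}=\inf_q\max_ep_e/Q_e$ over distributions $q$ on tests, where $Q_e=\sum_{i:e\in s_i}q_i$ (these are the optimal values of the SUM and MAX objectives over memoryless schedules). *)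

(* Defs.v *)
From HB Require Import structures.
From mathcomp Require Import all_boot all_order all_algebra.
From mathcomp Require Import all_classical all_reals all_analysis.
Set Implicit Arguments. Unset Strict Implicit. Unset Printing Implicit Defensive.
Import Order.TTheory GRing.Theory Num.Theory.
Import numFieldNormedType.Exports.
Local Open Scope classical_set_scope.
Local Open Scope ring_scope.

Section Testing.
Variables (R : realType) (E : finType) (m : nat) (s : 'I_m -> {set E}).

(* A deterministic schedule: sigma t is the test performed at time t
   (times are indexed from 0 instead of 1). *)
Definition det_schedule := nat -> 'I_m.

Definition detT (sigma : det_schedule) (e : E) (t : nat) : \bar R :=
  ereal_inf [set ((h.+1)%:R : R)%:E | h in [set h : nat | e \in s (sigma (t + h))]].

Definition detM (sigma : det_schedule) (e : E) : \bar R :=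
  ereal_sup (range (detT sigma e)).

(* Cesaro averages (1/H) sum_{t <= H} T(e,t), with H+1 time steps 0..H. *)
Definition cesaroT (sigma : det_schedule) (e : E) (H : nat) : R :=
  (H.+1%:R)^-1 * \sum_(t < H.+1) fine (detT sigma e t).

Definition freq (sigma : det_schedule) (i : 'I_m) (H : nat) : R :=
  (H.+1%:R)^-1 * \sum_(t < H.+1) (if sigma t == i then 1 else 0).

Definition valid_det (sigma : det_schedule) : Prop :=
  [/\ forall e, detM sigma e < +oo,
      forall e, cvgn (cesaroT sigma e)
    & forall i, cvgn (freq sigma i)]%E.

Definition EMP (p : E -> R) (sigma : det_schedule) : \bar R :=
  (\sum_(e : E) (p e)%:E * detM sigma e)%E.

Definition WMP (p : E -> R) (sigma : det_schedule) : \bar R :=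
  ereal_sup [set x | exists e t, x = ((p e)%:E * detT sigma e t)%E].

Definition optD_EMP (p : E -> R) : \bar R := ereal_inf [set EMP p sigma | sigma in valid_det].
Definition optD_WMP (p : E -> R) : \bar R := ereal_inf [set WMP p sigma | sigma in valid_det].

Definition test_distr : set ('I_m -> R) :=
  [set q | (forall i, 0 <= q i) /\ \sum_(i < m) q i = 1].

Definition Qe (q : 'I_m -> R) (e : E) : R := \sum_(i < m | e \in s i) q i.

(* p_e / Q_e, as the (extended-real) memoryless objective term; Q_e = 0
   means e is never detected, the term is then +oo. *)
Definition ratio (pe Qv : R) : \bar R := if Qv == 0 then +oo%E else (pe / Qv)%:E.

Definition optM_SUM (p : E -> R) : \bar R :=
  ereal_inf [set (\sum_(e : E) ratio (p e) (Qe q e))%E | q in test_distr].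

Definition optM_MAX (p : E -> R) : \bar R :=
  ereal_inf [set (\big[Order.max/-oo]_(e : E) ratio (p e) (Qe q e))%E | q in test_distr].

End Testing.

(* Main.v *)
Require Import Defs.
From HB Require Import structures.
From mathcomp Require Import all_boot all_order all_algebra.
From mathcomp Require Import all_classical all_reals all_analysis.
From mathcomp Require Import zify.
Import Order.TTheory GRing.Theory Num.Theory.
Import numFieldNormedType.Exports.
Lemma window_sum (b : nat -> bool) (a N h : nat) : h < N -> b (a + h) ->
  (1 <= \sum_(a <= t < a + N) b t)%N.
Proof.
move=> hN bh.
rewrite (big_cat_nat _ (n := a + h)) ?leq_addr ?leq_add2l ?(ltnW hN) //=.
rewrite [X in _ + X]big_ltn ?ltn_add2l //= bh.
lia.
Qed.

Lemma count_lb (b : nat -> bool) N :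
  (forall t, exists2 h, h < N & b (t + h)) ->
  forall k, (k <= \sum_(0 <= t < k * N) b t)%N.
Proof.
move=> hb; elim=> [|k IH] //.
rewrite mulSnr (big_cat_nat _ (n := k * N)) ?leq_addr //=.
have [h hN bh] := hb (k * N).
have := @window_sum b _ _ _ hN bh.
lia.
Qed.

Lemma sum_mono (b : nat -> bool) n n' : (n <= n')%N ->
  (\sum_(0 <= t < n) b t <= \sum_(0 <= t < n') b t)%N.
Proof.
move=> le; rewrite [X in _ <= X](big_cat_nat _ (n := n)) //=; lia.
Qed.

Local Open Scope ring_scope.

Lemma count_real (R : realType) (b : nat -> bool) N : (0 < N)%N ->
  (forall t, exists2 h, (h < N)%N & b (t + h)%N) ->
  forall H, (N%:R : R)^-1 <= (H.+1%:R)^-1 * (\sum_(0 <= t < H.+1) b t)%:R + (H.+1%:R)^-1.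
Proof.
move=> N0 hb H.
set c := (\sum_(0 <= t < H.+1) b t)%N.
have hc : (H.+1 %/ N <= c)%N.
  have := @count_lb b N hb (H.+1 %/ N); have := @sum_mono b _ _ (leq_divM H.+1 N).
  rewrite /c; lia.
have hlt : (H.+1 < c.+1 * N)%N.
  have := ltn_ceil H.+1 N0; have : ((H.+1 %/ N).+1 * N <= c.+1 * N)%N by rewrite leq_mul2r ltnS hc orbT.
  lia.
have : (H.+1%:R : R) <= (c.+1 * N)%:R by rewrite ler_nat ltnW.
move=> h.
have Hp : (0 : R) < H.+1%:R by rewrite ltr0n.
have Np : (0 : R) < N%:R by rewrite ltr0n.
rewrite [_^-1 * _]mulrC -[X in _ + X]mul1r -mulrDl.
rewrite ler_pdivlMr // mulrC ler_pdivrMr //.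
by rewrite natr1 -natrM.
Qed.

Local Open Scope classical_set_scope.
Local Open Scope ring_scope.
Section S.
Variables (R : realType) (E : finType) (m : nat) (s : 'I_m -> {set E}).
Variables (sigma : det_schedule m).

Lemma detT_ge1 e t : (1%:E <= detT R s sigma e t)%E.
Proof. by apply: le_ereal_inf_tmp => _ [h _ <-]; rewrite lee_fin ler1n. Qed.

Lemma detT_hit e t : (detT R s sigma e t < +oo)%E ->
  exists h, e \in s (sigma (t + h)%N) /\ detT R s sigma e t = (h.+1%:R)%:E.
Proof.
move=> fin.
have ex : exists h, e \in s (sigma (t + h)%N).
  apply: contrapT => nex; move: fin; rewrite /detT.
  suff -> : [set h : nat | e \in s (sigma (t + h)%N)] = set0.
    by rewrite image_set0 ereal_inf0.
  by apply/seteqP; split => // h hh; apply: nex; exists h.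
exists (ex_minn ex); split; first by case: ex_minnP.
apply/eqP; rewrite eq_le; apply/andP; split.
  by apply: ereal_inf_lbound; exists (ex_minn ex) => //; case: ex_minnP.
apply: le_ereal_inf_tmp => _ [h hh <-]; rewrite lee_fin ler_nat ltnS.
by case: ex_minnP => n _ /(_ _ hh).
Qed.

Lemma key (e : E) : (Defs.detM R s sigma e < +oo)%E ->
  exists N : nat, [/\ (0 < N)%N, exists t0, detT R s sigma e t0 = (N%:R)%:E,
     (N%:R%:E <= Defs.detM R s sigma e)%E &
     forall t, exists2 h, (h < N)%N & e \in s (sigma (t + h)%N)].
Proof.
move=> fin.
have Tle t : (detT R s sigma e t <= Defs.detM R s sigma e)%E.
  by apply: ereal_sup_ubound; exists t.
have Tfin t : (detT R s sigma e t < +oo)%E by apply: le_lt_trans (Tle t) fin.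
have Mge1 : (1%:E <= Defs.detM R s sigma e)%E := le_trans (detT_ge1 e 0) (Tle 0%N).
have Mfin : Defs.detM R s sigma e \is a fin_num.
  rewrite fin_numE; apply/andP; split; last by rewrite lt_eqF.
  by apply/negP => /eqP h; rewrite h in Mge1.
set M := fine (Defs.detM R s sigma e).
have hM : Defs.detM R s sigma e = M%:E by rewrite fineK.
have : ((M - 1)%:E < ereal_sup (range (detT R s sigma e)))%E.
  by rewrite -/(Defs.detM R s sigma e) hM lte_fin ltrBlDr ltrDl.
move=> /ereal_sup_gt [_ [t0 _ <-]] lt0.
have [h0 [_ e0]] := @detT_hit e t0 (Tfin t0).
exists h0.+1; split => //; first by exists t0.
  by rewrite -e0.
move=> t; have [h [hh eh]] := @detT_hit e t (Tfin t).
exists h => //.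
have := Tle t; rewrite eh hM lee_fin => le1.
move: lt0; rewrite e0 lte_fin ltrBlDr => lt1.
have : (h.+1%:R : R) < h0.+1%:R + 1 by apply: le_lt_trans lt1.
by rewrite natr1 ltr_nat ltnS.
Qed.

Lemma freq_sumP (e : E) H :
  \sum_(i < m | e \in s i) freq R sigma i H =
  (H.+1%:R)^-1 * (\sum_(0 <= t < H.+1) (e \in s (sigma t)))%N%:R.
Proof.
rewrite /freq -mulr_sumr; congr (_ * _).
rewrite exchange_big /= natr_sum big_mkord; apply: eq_bigr => t _.
case: (boolP (e \in s (sigma t))) => et.
  rewrite (bigD1 (sigma t)) //= eqxx big1 ?addr0 // => i /andP[_ /negbTE].
  by rewrite eq_sym => ->.
rewrite big1 // => i ei; case: eqP => // ?; subst.
by rewrite ei in et.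
Qed.

Lemma freq_sum1 H : \sum_(i < m) freq R sigma i H = 1.
Proof.
rewrite /freq -mulr_sumr exchange_big /=.
rewrite (eq_bigr (fun _ => 1)) => [|t _].
  by rewrite sumr_const card_ord mulVr // unitfE pnatr_eq0.
by rewrite (bigD1 (sigma t)) //= eqxx big1 ?addr0 // => i; rewrite eq_sym => /negbTE ->.
Qed.

Lemma freq_ge0 i H : 0 <= freq R sigma i H.
Proof.
by rewrite /freq mulr_ge0 // ?invr_ge0 // sumr_ge0 // => t _; case: ifP.
Qed.

Variable hfreq : forall i, cvgn (freq R sigma i).
Definition q i := limn (freq R sigma i).

Lemma cvg_sumq (P : pred 'I_m) :
  (fun H => \sum_(i < m | P i) freq R sigma i H) @ \oo --> \sum_(i < m | P i) q i.
Proof.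
apply: (@cvg_big R 'I_m +%R 0 P add_continuous nat \oo (index_enum _)
   (fun i H => freq R sigma i H) q _ (fun i _ => hfreq i)).
Qed.

Lemma q_distr : test_distr q.
Proof.
split.
  move=> i; apply: limr_ge; first exact: hfreq.
  by apply: nearW => H; exact: freq_ge0.
have := cvg_sumq predT.
under eq_cvg do rewrite freq_sum1.
by move=> /(cvg_lim (@Rhausdorff R)); rewrite lim_cst.
Qed.

Lemma Q_lb (e : E) N : (0 < N)%N ->
  (forall t, exists2 h, (h < N)%N & e \in s (sigma (t + h)%N)) ->
  (N%:R)^-1 <= Qe s q e.
Proof.
move=> N0 hb.
have c1 := cvg_sumq (fun i => e \in s i).
have c2 : (fun H => \sum_(i < m | e \in s i) freq R sigma i H + harmonic H) @ \oo
   --> Qe s q e + 0 by apply: cvgD => //; exact: cvg_harmonic.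
rewrite -[Qe s q e]addr0 -(cvg_lim (@Rhausdorff R) c2).
apply: limr_ge; first by apply/cvg_ex; eexists; exact: c2.
apply: nearW => H; rewrite freq_sumP /=.
exact: (@count_real R (fun t => e \in s (sigma t)) N N0 hb H).
Qed.
End S.

Theorem lemma8 (R : realType) (E : finType) (m : nat) (s : 'I_m -> {set E})
    (p : E -> R) (p_ge0 : forall e, 0 <= p e) :
  (\sum_(e : E) p e = 1 -> (optM_SUM s p <= optD_EMP s p)%E) /\
  (\big[Num.max/0]_(e : E) p e = 1 -> (optM_MAX s p <= optD_WMP s p)%E).
Proof.
have main : forall sigma, valid_det R s sigma -> forall e,
   exists N : nat, [/\ (Defs.ratio (p e) (Qe s (q R m sigma) e) <= (p e)%:E * (N%:R)%:E)%E,
      exists t0, detT R s sigma e t0 = (N%:R)%:E &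
      (N%:R%:E <= Defs.detM R s sigma e)%E].
  move=> sigma [hM hc hf] e.
  have [N [N0 [t0 et0] NM hb]] := @key R E m s sigma e (hM e).
  have Qlb := @Q_lb R E m s sigma hf e N N0 hb.
  have Qp : 0 < Qe s (q R m sigma) e by apply: lt_le_trans Qlb; rewrite invr_gt0 ltr0n.
  exists N; split => //; last by exists t0.
  rewrite /Defs.ratio gt_eqF // -EFinM lee_fin ler_wpM2l //.
  by rewrite -[N%:R]invrK lef_pV2 // posrE ?invr_gt0 ltr0n.
split => _.
  apply: le_ereal_inf_tmp => _ [sigma hv <-].
  apply: le_trans (ereal_inf_lbound _) _.
    by exists (q R m sigma) => //; case: hv => _ _ hf; exact: q_distr.
  rewrite /EMP; apply: lee_sum => e _.
  have [N [h1 _ h3]] := main sigma hv e.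
  by apply: le_trans h1 _; apply: lee_wpmul2l; rewrite ?lee_fin.
apply: le_ereal_inf_tmp => _ [sigma hv <-].
apply: le_trans (ereal_inf_lbound _) _.
  by exists (q R m sigma) => //; case: hv => _ _ hf; exact: q_distr.
apply: bigmax_le => [|e _]; first exact: leNye.
have [N [h1 [t0 h2] _]] := main sigma hv e.
apply: le_trans h1 _; rewrite -h2.
by apply: ereal_sup_ubound; exists e, t0.
Qed.
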